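(* Let $A,B,C$ be real constants and, for a metric $g$ on an $n$-dimensional spacetime, set $$F = A\,R^{\alpha\beta\gamma\delta}R_{\alpha\beta\gamma\delta}+B\,R^{\alpha\beta}R_{\alpha\beta}+C\,R^{2},\qquad H^{\mu\nu}=\frac{1}{n-4}\,\frac{1}{\sqrt{|g|}}\,\frac{\delta}{\delta g_{\mu\nu}}\int F\sqrt{|g|}\,d^{n}x .$$ Suppose that, for every static spherically symmetric (SSS) metric $$ds^{2}=e^{\nu(r)}dt^{2}-e^{\lambda(r)}dr^{2}-r^{2}\,d\Omega^{2}_{n-2},$$ the quantity $H^{\mu\nu}$ has a finite limit as $n\to 4$. Then $(A,B,C)$ is proportional to the Gauss–Bonnet combination $(1,-4,1)$, i.e. $B=-4C$ and $A=C$; equivalently, $F$ is a multiple of $GB=R^{\alpha\beta\gamma\delta}R_{\alpha\beta\gamma\delta}-4R^{\alpha\beta}R_{\alpha\beta}+R^{2}$.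
   Context: This arises in the dimensional-regularization treatment of one-loop quantum corrections to gravity: the quantum correction term is $H^{\mu\nu}$ as defined, with $n$ regarded as a continuous dimension parameter near $4$. Writing $F\sqrt{|g|}$ evaluated on the SSS metric as $f_0+(n-4)f_1+O((n-4)^2)$, finiteness as $n\to4$ means the variational derivative (Euler–Lagrange expression with respect to $\nu$ and $\lambda$, total derivatives discarded) of the $O((n-4)^0)$ part vanishes. In the SSS metric, $\nu$ and $\lambda$ are arbitrary smooth functions of the radial coordinate $r$ and $d\Omega^2_{n-2}$ is the line element of the unit $(n-2)$-sphere; signature $(+,-,\dots,-)$. *)

(* Defs.v *)
From Stdlib Require Import Reals.
From Coquelicot Require Import Coquelicot.
Open Scope R_scope.

(** Points of 4-dimensional coordinate space, coordinates indexed by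
    0 = t, 1 = r, 2 = theta, 3 = phi (indices >= 4 are never used). *)
Definition Pt := nat -> R.

Definition pt (t r th ph : R) : Pt :=
  fun i => match i with 0%nat => t | 1%nat => r | 2%nat => th | _ => ph end.

Definition upd (x : Pt) (a : nat) (s : R) : Pt :=
  fun i => if Nat.eqb i a then s else x i.

Definition pd (a : nat) (f : Pt -> R) (x : Pt) : R :=
  Derive (fun s => f (upd x a s)) (x a).

Definition sum4 (f : nat -> R) : R := f 0%nat + f 1%nat + f 2%nat + f 3%nat.

(** A metric is given by its components g_{ab}(x); [gi] is the inverse metric
    g^{ab}(x). *)
Definition tensor2 := nat -> nat -> Pt -> R.

Definition Gam (g gi : tensor2) (a b c : nat) (x : Pt) : R :=
  / 2 * sum4 (fun d => gi a d x *
     (pd b (g d c) x + pd c (g d b) x - pd d (g b c) x)).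

(** Riemann tensor R^a_{bcd}.  (Quadratic invariants below do not depend on
    the overall sign conventions.) *)
Definition Riem (g gi : tensor2) (a b c d : nat) (x : Pt) : R :=
  pd c (Gam g gi a d b) x - pd d (Gam g gi a c b) x
  + sum4 (fun e => Gam g gi a c e x * Gam g gi e d b x
                   - Gam g gi a d e x * Gam g gi e c b x).

Definition Ric (g gi : tensor2) (b d : nat) (x : Pt) : R :=
  sum4 (fun a => Riem g gi a b a d x).

Definition Rscal (g gi : tensor2) (x : Pt) : R :=
  sum4 (fun b => sum4 (fun d => gi b d x * Ric g gi b d x)).

Definition Kret (g gi : tensor2) (x : Pt) : R :=
  sum4 (fun a => sum4 (fun b => sum4 (fun c => sum4 (fun d =>
    sum4 (fun e => g a e x * Riem g gi e b c d x) *
    sum4 (fun b' => sum4 (fun c' => sum4 (fun d' =>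
      gi b b' x * gi c c' x * gi d d' x * Riem g gi a b' c' d' x))))))).

Definition Ric2 (g gi : tensor2) (x : Pt) : R :=
  sum4 (fun a => sum4 (fun b => sum4 (fun c => sum4 (fun d =>
    gi a c x * gi b d x * Ric g gi a b x * Ric g gi c d x)))).

Definition diagm (dg : nat -> Pt -> R) : tensor2 :=
  fun a b x => if Nat.eqb a b then dg a x else 0.
Definition diagm_inv (dg : nat -> Pt -> R) : tensor2 :=
  fun a b x => if Nat.eqb a b then / dg a x else 0.
Definition diag_sqrtdet (dg : nat -> Pt -> R) (x : Pt) : R :=
  sqrt (Rabs (dg 0%nat x * dg 1%nat x * dg 2%nat x * dg 3%nat x)).

(** The static spherically symmetric metric at n = 4, signature (+,-,-,-):
    ds^2 = e^{nu(r)} dt^2 - e^{lambda(r)} dr^2 - r^2 (dtheta^2 + sin^2 theta dphi^2). *)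
Definition sss (nu la : R -> R) (a : nat) (x : Pt) : R :=
  match a with
  | 0%nat => exp (nu (x 1%nat))
  | 1%nat => - exp (la (x 1%nat))
  | 2%nat => - (x 1%nat) ^ 2
  | _ => - (x 1%nat) ^ 2 * (sin (x 2%nat)) ^ 2
  end.

(** f0 : the O((n-4)^0) part of F sqrt|g| on the SSS metric, i.e. its value
    at n = 4, with F = A Riem^2 + B Ric^2 + C R^2. *)
Definition f0 (A B C : R) (nu la : R -> R) (x : Pt) : R :=
  let g := diagm (sss nu la) in
  let gi := diagm_inv (sss nu la) in
  (A * Kret g gi x + B * Ric2 g gi x + C * (Rscal g gi x) ^ 2)
  * diag_sqrtdet (sss nu la) x.

(** Reduced action (per unit time) of f0 over the shell a <= r <= b. *)
Definition S0 (A B C : R) (nu la : R -> R) (a b : R) : R :=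
  RInt (fun r => RInt (fun th => RInt (fun ph =>
    f0 A B C nu la (pt 0 r th ph)) 0 (2 * PI)) 0 PI) a b.

Definition smooth (f : R -> R) : Prop := forall (k : nat) (x : R), ex_derive_n f k x.

Definition supported_in (eta : R -> R) (a b : R) : Prop :=
  exists a' b', a < a' /\ a' < b' /\ b' < b /\
    forall r, (r < a' \/ b' < r) -> eta r = 0.

(** Finiteness of H^{mu nu} as n -> 4 on all SSS metrics: the variational
    derivative of the O((n-4)^0) part f0 with respect to nu and to lambda
    vanishes, i.e. the first variation of the action of f0 vanishes for all
    compactly supported smooth variations (total derivatives thus discarded). *)
Definition H_finite_at_4 (A B C : R) : Prop :=
  forall nu la : R -> R, smooth nu -> smooth la ->
  forall (a b : R) (eta : R -> R), 0 < a -> a < b -> smooth eta ->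
  supported_in eta a b ->
  Derive (fun eps => S0 A B C (fun r => nu r + eps * eta r) la a b) 0 = 0 /\
  Derive (fun eps => S0 A B C nu (fun r => la r + eps * eta r) a b) 0 = 0.

(* Main.v *)
Require Import Defs.
From Stdlib Require Import Reals.
From Coquelicot Require Import Coquelicot.
From Stdlib Require Import Lra Lia FunctionalExtensionality.
Open Scope R_scope.

Definition gT (nu : R -> R) (c : R) (d : nat) (r th : R) : R :=
  match d with 0%nat => exp (nu r) | 1%nat => - exp c | 2%nat => - r ^ 2
  | _ => - r ^ 2 * sin th ^ 2 end.

Definition dgT (nu : R -> R) (c : R) (b d e : nat) (r th : R) : R :=
  if Nat.eqb d e then
  match b, d with
  | 1%nat, 0%nat => Derive nu r * exp (nu r)
  | 1%nat, 1%nat => 0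
  | 1%nat, 2%nat => - (2 * r)
  | 1%nat, _ => - (2 * r) * sin th ^ 2
  | 2%nat, 0%nat | 2%nat, 1%nat | 2%nat, 2%nat => 0
  | 2%nat, _ => - r ^ 2 * (2 * sin th * cos th)
  | _, _ => 0 end
  else 0.

Lemma Derive_const' (k x : R) : Derive (fun _ => k) x = 0.
Proof. apply Derive_const. Qed.

Ltac side := repeat split; auto.

Lemma pd_g (nu : R -> R) (c : R) (b d e : nat) (y : Pt) : (forall x, ex_derive nu x) ->
  pd b (diagm (sss nu (fun _ => c)) d e) y = dgT nu c b d e (y 1%nat) (y 2%nat).
Proof.
  intros Hn. unfold pd, diagm, dgT.
  destruct (Nat.eqb d e) eqn:Hde; [|apply Derive_const'].
  destruct b as [|[|[|b]]]; unfold upd; simpl;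
  destruct d as [|[|[|d]]]; simpl; try apply Derive_const'.
  all: apply is_derive_unique; auto_derive; [auto | try ring].
  change (fun x : R => nu x) with nu; ring.
Qed.

Definition GamT (nu : R -> R) (c : R) (a b e : nat) (r th : R) : R :=
  / 2 * / gT nu c a r th *
     (dgT nu c b a e r th + dgT nu c e a b r th - dgT nu c a b e r th).

Lemma sss_gT (nu : R -> R) (c : R) d y : sss nu (fun _ => c) d y = gT nu c d (y 1%nat) (y 2%nat).
Proof. destruct d as [|[|[|d]]]; reflexivity. Qed.

Lemma Gam_eq (nu : R -> R) (c : R) (a b e : nat) (y : Pt) : (a < 4)%nat -> (forall x, ex_derive nu x) ->
  Gam (diagm (sss nu (fun _ => c))) (diagm_inv (sss nu (fun _ => c))) a b e y
  = GamT nu c a b e (y 1%nat) (y 2%nat).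
Proof.
  intros Ha Hn. unfold Gam, GamT, sum4. rewrite !pd_g by exact Hn.
  unfold diagm_inv. rewrite !sss_gT.
  destruct a as [|[|[|[|a]]]]; simpl; try ring. exfalso; apply Nat.lt_irrefl with 4%nat.
  eapply Nat.le_lt_trans; [|exact Ha]. repeat apply le_n_S. apply Nat.le_0_l.
Qed.

Lemma pd_fun12 (h : R -> R -> R) (c : nat) (x : Pt) :
  pd c (fun y => h (y 1%nat) (y 2%nat)) x =
  match c with 1%nat => Derive (fun s => h s (x 2%nat)) (x 1%nat)
  | 2%nat => Derive (fun s => h (x 1%nat) s) (x 2%nat) | _ => 0 end.
Proof.
  unfold pd, upd. destruct c as [|[|[|c]]]; simpl; try reflexivity; apply Derive_const'.
Qed.

Lemma pd_Gam (nu : R -> R) (c : R) (a b e k : nat) (x : Pt) : (a < 4)%nat -> (forall x, ex_derive nu x) ->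
  pd k (Gam (diagm (sss nu (fun _ => c))) (diagm_inv (sss nu (fun _ => c))) a b e) x =
  match k with 1%nat => Derive (fun s => GamT nu c a b e s (x 2%nat)) (x 1%nat)
  | 2%nat => Derive (fun s => GamT nu c a b e (x 1%nat) s) (x 2%nat) | _ => 0 end.
Proof.
  intros Ha Hn.
  replace (Gam (diagm (sss nu (fun _ => c))) (diagm_inv (sss nu (fun _ => c))) a b e)
    with (fun y => GamT nu c a b e (y 1%nat) (y 2%nat)).
  apply pd_fun12.
  apply functional_extensionality; intros y; rewrite Gam_eq; auto.
Qed.

Ltac nz := match goal with
  | |- _ * _ <> 0 => apply Rmult_integral_contrapositive_currified; nz
  | |- - _ <> 0 => apply Ropp_neq_0_compat; nz
  | |- exp _ <> 0 => apply Rgt_not_eq, exp_pos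
  | |- / _ <> 0 => apply Rinv_neq_0_compat; nz
  | |- 1 <> 0 => apply R1_neq_R0
  | |- _ => first [assumption | lra]
  end.

Ltac side2 := repeat split; try nz; auto.

Ltac is_atomfun f := first [ is_var f | lazymatch f with Derive _ => idtac end
   | lazymatch f with (fun x => ?h x) => first [is_var h | lazymatch h with Derive _ => idtac end] end ].

Ltac do_der := match goal with
  | |- context [Derive (fun _ : R => ?k) ?p] => rewrite (Derive_const' k p)
  | |- context [Derive ?f ?p] =>
     tryif is_atomfun f then fail else
     let H := fresh in
     eassert (H : is_derive f p _) by (auto_derive; [side2 | reflexivity]);
     rewrite (is_derive_unique _ _ _ H); clear H
  end.

Definition sT (nu : R -> R) (c : R) (a b : nat) (r : R) : R :=
  match a, b with
  | 0%nat, 1%nat | 1%nat, 0%nat => (Derive (Derive nu) r / 2 + Derive nu r ^ 2 / 4) / exp c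
  | 0%nat, 2%nat | 2%nat, 0%nat | 0%nat, 3%nat | 3%nat, 0%nat => Derive nu r / (2 * r * exp c)
  | 2%nat, 3%nat | 3%nat, 2%nat => (/ exp c - 1) / r ^ 2
  | _, _ => 0 end.

Definition RT (nu : R -> R) (c : R) (a b e d : nat) (r th : R) : R :=
  if andb (andb (Nat.eqb a e) (Nat.eqb b d)) (negb (Nat.eqb a b)) then sT nu c a b r * gT nu c b r th
  else if andb (andb (Nat.eqb a d) (Nat.eqb b e)) (negb (Nat.eqb a b)) then - (sT nu c a b r * gT nu c b r th)
  else 0.

Lemma RiemE (nu : R -> R) (c : R) (x : Pt) (a b e d : nat) :
  (forall x, ex_derive nu x) -> (forall x, ex_derive (Derive nu) x) ->
  x 1%nat <> 0 -> sin (x 2%nat) <> 0 ->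
  (a < 4)%nat -> (b < 4)%nat -> (e < 4)%nat -> (d < 4)%nat ->
  Riem (diagm (sss nu (fun _ => c))) (diagm_inv (sss nu (fun _ => c))) a b e d x
  = RT nu c a b e d (x 1%nat) (x 2%nat).
Proof.
  intros H1 H2 Hr Hs Ha Hb He Hd.
  unfold Riem. rewrite !pd_Gam by (auto; lia). unfold sum4. rewrite !Gam_eq by (auto; lia).
  set (r := x 1%nat) in *. set (th := x 2%nat) in *.
  assert (Hc : exp c <> 0) by nz.
  assert (Hn : exp (nu r) <> 0) by nz.
  destruct a as [|[|[|[|a]]]]; try lia;
  destruct b as [|[|[|[|b]]]]; try lia;
  destruct e as [|[|[|[|e]]]]; try lia;
  destruct d as [|[|[|[|d]]]]; try lia;
  unfold RT, sT, GamT, dgT, gT; simpl;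
  repeat do_der;
  change (fun x : R => nu x) with nu in *;
  change (fun x : R => Derive nu x) with (Derive nu) in *;
  field; repeat split; nz.
Qed.

Lemma sum4_ext (f g : nat -> R) : (forall i, (i < 4)%nat -> f i = g i) -> sum4 f = sum4 g.
Proof. intros H; unfold sum4; rewrite !H by lia; reflexivity. Qed.

Section S.
Variable G : nat -> Pt -> R.
Variable x : Pt.
Let g := diagm G.
Let gi := diagm_inv G.

Lemma inner1 (F : nat -> R) a : (a < 4)%nat -> sum4 (fun e => g a e x * F e) = G a x * F a.
Proof. intros; unfold g, diagm, sum4; destruct a as [|[|[|[|a]]]]; try lia; simpl; ring. Qed.

Lemma inner3 (F : nat -> nat -> nat -> R) b c d : (b < 4)%nat -> (c < 4)%nat -> (d < 4)%nat ->
  sum4 (fun b' => sum4 (fun c' => sum4 (fun d' => gi b b' x * gi c c' x * gi d d' x * F b' c' d')))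
  = / G b x * / G c x * / G d x * F b c d.
Proof.
  intros; unfold gi, diagm_inv, sum4;
  destruct b as [|[|[|[|b]]]]; try lia;
  destruct c as [|[|[|[|c]]]]; try lia;
  destruct d as [|[|[|[|d]]]]; try lia; simpl; ring.
Qed.

Lemma Kret_diag : Kret g gi x = sum4 (fun a => sum4 (fun b => sum4 (fun c => sum4 (fun d =>
   G a x * Riem g gi a b c d x * (/ G b x * / G c x * / G d x * Riem g gi a b c d x))))).
Proof.
  unfold Kret. apply sum4_ext; intros a Ha; apply sum4_ext; intros b Hb;
  apply sum4_ext; intros c Hc; apply sum4_ext; intros d Hd.
  rewrite (inner1 (fun e => Riem g gi e b c d x)) by auto.
  rewrite (inner3 (fun b' c' d' => Riem g gi a b' c' d' x)) by auto. reflexivity.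
Qed.

Lemma Ric2_diag : Ric2 g gi x = sum4 (fun a => sum4 (fun b =>
   / G a x * / G b x * Ric g gi a b x * Ric g gi a b x)).
Proof.
  unfold Ric2. apply sum4_ext; intros a Ha; apply sum4_ext; intros b Hb.
  unfold gi, diagm_inv, sum4;
  destruct a as [|[|[|[|a]]]]; try lia;
  destruct b as [|[|[|[|b]]]]; try lia; simpl; ring.
Qed.

Lemma Rscal_diag : Rscal g gi x = sum4 (fun b => / G b x * Ric g gi b b x).
Proof.
  unfold Rscal. apply sum4_ext; intros b Hb.
  unfold gi, diagm_inv, sum4;
  destruct b as [|[|[|[|b]]]]; try lia; simpl; ring.
Qed.
End S.


Ltac fin := field; repeat split; nz.

Lemma KretE (nu : R -> R) (c : R) (x : Pt) :
  (forall x, ex_derive nu x) -> (forall x, ex_derive (Derive nu) x) ->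
  x 1%nat <> 0 -> sin (x 2%nat) <> 0 ->
  Kret (diagm (sss nu (fun _ => c))) (diagm_inv (sss nu (fun _ => c))) x =
  4 * (sT nu c 0 1 (x 1%nat) ^ 2 + 2 * sT nu c 0 2 (x 1%nat) ^ 2
       + sT nu c 2 3 (x 1%nat) ^ 2).
Proof.
  intros H1 H2 Hr Hs.
  rewrite Kret_diag.
  erewrite sum4_ext; [| intros a Ha; apply sum4_ext; intros b Hb;
  apply sum4_ext; intros e He; apply sum4_ext; intros d Hd; rewrite RiemE by auto; reflexivity].
  unfold sum4, RT; simpl.
  assert (Hc : exp c <> 0) by nz.
  assert (Hn : exp (nu (x 1%nat)) <> 0) by nz.
  unfold sT, gT.
  Time fin.
Qed.

Lemma RscalE (nu : R -> R) (c : R) (x : Pt) :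
  (forall x, ex_derive nu x) -> (forall x, ex_derive (Derive nu) x) ->
  x 1%nat <> 0 -> sin (x 2%nat) <> 0 ->
  Rscal (diagm (sss nu (fun _ => c))) (diagm_inv (sss nu (fun _ => c))) x =
  2 * (sT nu c 0 1 (x 1%nat) + 2 * sT nu c 0 2 (x 1%nat) + sT nu c 2 3 (x 1%nat)).
Proof.
  intros H1 H2 Hr Hs.
  rewrite Rscal_diag.
  erewrite sum4_ext; [| intros a Ha; unfold Ric; erewrite sum4_ext;
     [| intros e He; rewrite RiemE by auto; reflexivity]; reflexivity].
  unfold sum4, RT; simpl.
  assert (Hc : exp c <> 0) by nz.
  assert (Hn : exp (nu (x 1%nat)) <> 0) by nz.
  unfold sT, gT. fin.
Qed.

Lemma Ric2E (nu : R -> R) (c : R) (x : Pt) :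
  (forall x, ex_derive nu x) -> (forall x, ex_derive (Derive nu) x) ->
  x 1%nat <> 0 -> sin (x 2%nat) <> 0 ->
  Ric2 (diagm (sss nu (fun _ => c))) (diagm_inv (sss nu (fun _ => c))) x =
  (sT nu c 0 1 (x 1%nat) + 2 * sT nu c 0 2 (x 1%nat)) ^ 2 + sT nu c 0 1 (x 1%nat) ^ 2
  + 2 * (sT nu c 0 2 (x 1%nat) + sT nu c 2 3 (x 1%nat)) ^ 2.
Proof.
  intros H1 H2 Hr Hs.
  rewrite Ric2_diag.
  erewrite sum4_ext; [| intros a Ha; apply sum4_ext; intros b Hb; unfold Ric; erewrite sum4_ext;
     [| intros e He; rewrite RiemE by auto; reflexivity]; reflexivity].
  unfold sum4, RT; simpl.
  assert (Hc : exp c <> 0) by nz.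
  assert (Hn : exp (nu (x 1%nat)) <> 0) by nz.
  unfold sT, gT. fin.
Qed.

Definition KV (nu : R -> R) c r := 4 * (sT nu c 0 1 r ^ 2 + 2 * sT nu c 0 2 r ^ 2 + sT nu c 2 3 r ^ 2).
Definition R2V (nu : R -> R) c r := (sT nu c 0 1 r + 2 * sT nu c 0 2 r) ^ 2 + sT nu c 0 1 r ^ 2
  + 2 * (sT nu c 0 2 r + sT nu c 2 3 r) ^ 2.
Definition RSV (nu : R -> R) c r := 2 * (sT nu c 0 1 r + 2 * sT nu c 0 2 r + sT nu c 2 3 r).
Definition Lam (A B C : R) (nu : R -> R) c r :=
  (A * KV nu c r + B * R2V nu c r + C * RSV nu c r ^ 2) * (exp (nu r / 2) * exp (c / 2) * r ^ 2).

Lemma sqrtdet_eq (nu : R -> R) c (x : Pt) : 0 < sin (x 2%nat) ->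
  diag_sqrtdet (sss nu (fun _ => c)) x = exp (nu (x 1%nat) / 2) * exp (c / 2) * x 1%nat ^ 2 * sin (x 2%nat).
Proof.
  intros Hs. unfold diag_sqrtdet, sss.
  set (r := x 1%nat) in *. set (th := x 2%nat) in *.
  replace (exp (nu r) * - exp c * - r ^ 2 * (- r ^ 2 * sin th ^ 2))
    with (- Rsqr (exp (nu r / 2) * exp (c / 2) * r ^ 2 * sin th)).
  - rewrite Rabs_Ropp, Rabs_pos_eq by apply Rle_0_sqr. rewrite sqrt_Rsqr_abs. apply Rabs_pos_eq.
    apply Rmult_le_pos; [|lra]. apply Rmult_le_pos; [|apply pow2_ge_0].
    apply Rmult_le_pos; apply Rlt_le, exp_pos.
  - unfold Rsqr.
    replace (exp (nu r)) with (exp (nu r / 2) * exp (nu r / 2)) by (rewrite <- exp_plus; f_equal; field).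
    replace (exp c) with (exp (c / 2) * exp (c / 2)) by (rewrite <- exp_plus; f_equal; field).
    ring.
Qed.

Lemma f0_eq (A B C : R) (nu : R -> R) c (x : Pt) :
  (forall x, ex_derive nu x) -> (forall x, ex_derive (Derive nu) x) ->
  x 1%nat <> 0 -> 0 < sin (x 2%nat) ->
  f0 A B C nu (fun _ => c) x = Lam A B C nu c (x 1%nat) * sin (x 2%nat).
Proof.
  intros H1 H2 Hr Hs.
  unfold f0. cbv zeta.
  rewrite KretE, Ric2E, RscalE by (auto; lra).
  rewrite sqrtdet_eq by auto. unfold Lam, KV, R2V, RSV. ring.
Qed.

Lemma RInt_sin : RInt sin 0 PI = 2.
Proof.
  apply is_RInt_unique.
  replace 2 with (minus ((fun x => - cos x) PI) ((fun x => - cos x) 0)).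
  - apply (is_RInt_derive (fun x => - cos x) sin).
    + intros x _. auto_derive; auto. ring.
    + intros x _. apply continuity_pt_filterlim. apply continuity_sin.
  - simpl. rewrite cos_PI, cos_0. unfold minus, plus, opp; simpl. ring.
Qed.

Lemma RInt_scal_R (f : R -> R) a b k : ex_RInt f a b -> RInt (fun x => k * f x) a b = k * RInt f a b.
Proof. intros H. exact (RInt_scal f a b k H). Qed.

Lemma S0_eq (A B C : R) (nu : R -> R) c a b :
  (forall x, ex_derive nu x) -> (forall x, ex_derive (Derive nu) x) ->
  (forall x, ex_derive (Derive (Derive nu)) x) -> 0 < a -> a < b ->
  S0 A B C nu (fun _ => c) a b = 4 * PI * RInt (fun r => Lam A B C nu c r) a b.
Proof.
  intros H1 H2 H3 Ha Hab. unfold S0.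
  transitivity (RInt (fun r => (4 * PI) * (Lam A B C nu c r)) a b).
  2: { rewrite RInt_scal_R. reflexivity. apply (ex_RInt_continuous (V:=R_CompleteNormedModule)).
       intros z Hz. rewrite Rmin_left in Hz by lra. rewrite Rmax_right in Hz by lra.
       apply (@ex_derive_continuous R_AbsRing R_NormedModule). unfold Lam, KV, R2V, RSV, sT.
       assert (Hz0 : z <> 0) by lra.
       auto_derive. repeat split; auto; nz. }
  apply RInt_ext. intros r Hr. rewrite Rmin_left in Hr by lra. rewrite Rmax_right in Hr by lra.
  transitivity (RInt (fun th => (2 * PI * Lam A B C nu c r) * (sin th)) 0 PI).
  - apply RInt_ext. intros th Hth. rewrite Rmin_left in Hth by (pose proof PI_RGT_0; lra).
    rewrite Rmax_right in Hth by (pose proof PI_RGT_0; lra).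
    assert (Hs : 0 < sin th) by (apply sin_gt_0; lra).
    rewrite (RInt_ext _ (fun _ => Lam A B C nu c r * sin th)).
    + rewrite RInt_const. unfold scal; simpl; unfold mult; simpl. ring.
    + intros ph _. rewrite f0_eq; simpl; auto; lra.
  - rewrite RInt_scal_R. rewrite RInt_sin. simpl. ring.
    apply (ex_RInt_continuous (V:=R_CompleteNormedModule)). intros z _. apply continuity_pt_filterlim. apply continuity_sin.
Qed.

Definition sTv (c n1 n2 : R) (a b : nat) (r : R) : R :=
  match a, b with
  | 0%nat, 1%nat | 1%nat, 0%nat => (n2 / 2 + n1 ^ 2 / 4) / exp c
  | 0%nat, 2%nat | 2%nat, 0%nat | 0%nat, 3%nat | 3%nat, 0%nat => n1 / (2 * r * exp c)
  | 2%nat, 3%nat | 3%nat, 2%nat => (/ exp c - 1) / r ^ 2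
  | _, _ => 0 end.

Definition LamV (A B C c n0 n1 n2 r : R) : R :=
  (A * (4 * (sTv c n1 n2 0 1 r ^ 2 + 2 * sTv c n1 n2 0 2 r ^ 2 + sTv c n1 n2 2 3 r ^ 2))
   + B * ((sTv c n1 n2 0 1 r + 2 * sTv c n1 n2 0 2 r) ^ 2 + sTv c n1 n2 0 1 r ^ 2
          + 2 * (sTv c n1 n2 0 2 r + sTv c n1 n2 2 3 r) ^ 2)
   + C * (2 * (sTv c n1 n2 0 1 r + 2 * sTv c n1 n2 0 2 r + sTv c n1 n2 2 3 r)) ^ 2)
  * (exp (n0 / 2) * exp (c / 2) * r ^ 2).

Lemma Lam_LamV A B C (nu : R -> R) c r :
  Lam A B C nu c r = LamV A B C c (nu r) (Derive nu r) (Derive (Derive nu) r) r.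
Proof. reflexivity. Qed.

Definition Phi (A B C c : R) (eta : R -> R) (eps r : R) : R :=
  LamV A B C c (0 + eps * eta r) (eps * Derive eta r) (eps * Derive (Derive eta) r) r.

Section Eta.
Variable eta : R -> R.
Hypothesis E1 : forall x, ex_derive eta x.
Hypothesis E2 : forall x, ex_derive (Derive eta) x.
Hypothesis E3 : forall x, ex_derive (Derive (Derive eta)) x.
Hypothesis E4 : forall x, ex_derive (Derive (Derive (Derive eta))) x.

Lemma Dnu_eps eps : Derive (fun r => 0 + eps * eta r) = fun r => eps * Derive eta r.
Proof.
  apply functional_extensionality; intros r. apply is_derive_unique.
  auto_derive; auto. change (fun x : R => eta x) with eta. ring.
Qed.

Lemma DDnu_eps eps : Derive (Derive (fun r => 0 + eps * eta r)) = fun r => eps * Derive (Derive eta) r.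
Proof.
  rewrite Dnu_eps. apply functional_extensionality; intros r. apply is_derive_unique.
  auto_derive; auto. change (fun x : R => Derive eta x) with (Derive eta). ring.
Qed.

Lemma S0_Phi A B C c eps : 
  S0 A B C (fun r => 0 + eps * eta r) (fun _ => c) 1 4 = 4 * PI * RInt (fun r => Phi A B C c eta eps r) 1 4.
Proof.
  rewrite S0_eq; try lra.
  - f_equal. apply RInt_ext. intros r _. rewrite Lam_LamV. unfold Phi.
    rewrite DDnu_eps, Dnu_eps. reflexivity.
  - intros x. auto_derive; auto.
  - rewrite Dnu_eps. intros x; auto_derive; auto.
  - rewrite DDnu_eps. intros x; auto_derive; auto.
Qed.
End Eta.

Definition k1 (A B C c : R) : R := exp (c / 2) * (2 * A + B + 2 * C) * (/ exp c - 1) ^ 2.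
Definition k2 (A B C c : R) : R := exp (c / 2) * (/ exp c - 1) * (2 * B + 8 * C) / exp c.
Definition k3 (A B C c : R) : R := 4 * exp (c / 2) * C * (/ exp c - 1) / exp c.

Lemma Phi_d0 (eta : R -> R) A B C c t : t <> 0 ->
  is_derive (fun u => Phi A B C c eta u t) 0
   (k1 A B C c * eta t / t ^ 2 + k2 A B C c * Derive eta t / t + k3 A B C c * Derive (Derive eta) t).
Proof.
  intros Ht. unfold Phi, LamV, sTv, k1, k2, k3.
  auto_derive. repeat split; nz.
  replace (exp ((0 + 0 * eta t) * / 2)) with 1 by (rewrite <- exp_0; f_equal; field).
  field. repeat split; nz.
Qed.

Lemma cont_of_ex_derive (f : R -> R) x : ex_derive f x -> continuity_pt f x.
Proof. intros H. apply continuity_pt_filterlim. apply (@ex_derive_continuous R_AbsRing R_NormedModule). exact H. Qed.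

Lemma c2_pow (f : R -> R -> R) x y n : continuity_2d_pt f x y -> continuity_2d_pt (fun u v => f u v ^ n) x y.
Proof.
  intros H. induction n as [|n IH].
  - simpl. apply continuity_2d_pt_const.
  - simpl. apply (continuity_2d_pt_mult f (fun u v => f u v ^ n)); auto.
Qed.

Lemma c2_div (f g : R -> R -> R) x y : continuity_2d_pt f x y -> continuity_2d_pt g x y -> g x y <> 0 ->
  continuity_2d_pt (fun u v => f u v / g u v) x y.
Proof.
  intros Hf Hg Hn. unfold Rdiv. apply (continuity_2d_pt_mult f (fun u v => / g u v)); auto.
  apply continuity_2d_pt_inv; auto.
Qed.

Ltac nz2 := match goal with
  | |- _ * _ <> 0 => apply Rmult_integral_contrapositive_currified; nz2
  | |- - _ <> 0 => apply Ropp_neq_0_compat; nz2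
  | |- _ ^ _ <> 0 => apply pow_nonzero; nz2
  | |- exp _ <> 0 => apply Rgt_not_eq, exp_pos
  | |- / _ <> 0 => apply Rinv_neq_0_compat; nz2
  | |- _ => first [assumption | lra]
  end.

Ltac c2 :=
  lazymatch goal with
  | |- continuity_2d_pt (fun _ _ => ?k) _ _ => apply continuity_2d_pt_const
  | |- continuity_2d_pt (fun u _ => u) _ _ => apply continuity_2d_pt_id1
  | |- continuity_2d_pt (fun _ v => v) _ _ => apply continuity_2d_pt_id2
  | |- continuity_2d_pt (fun u v => @?f u v + @?g u v) _ _ => apply (continuity_2d_pt_plus f g); c2
  | |- continuity_2d_pt (fun u v => @?f u v - @?g u v) _ _ => apply (continuity_2d_pt_minus f g); c2
  | |- continuity_2d_pt (fun u v => @?f u v * @?g u v) _ _ => apply (continuity_2d_pt_mult f g); c2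
  | |- continuity_2d_pt (fun u v => @?f u v / @?g u v) _ _ => apply (c2_div f g); [c2 | c2 | cbv beta; nz2]
  | |- continuity_2d_pt (fun u v => - @?f u v) _ _ => apply (continuity_2d_pt_opp f); c2
  | |- continuity_2d_pt (fun u v => / @?f u v) _ _ => apply (continuity_2d_pt_inv f); [c2 | cbv beta; nz2]
  | |- continuity_2d_pt (fun u v => @?f u v ^ ?n) _ _ => apply (c2_pow f _ _ n); c2
  | |- continuity_2d_pt (fun u v => ?h (@?g u v)) _ _ =>
      apply (continuity_1d_2d_pt_comp h g); [apply cont_of_ex_derive; first [auto_derive; auto | auto] | c2]
  end.

Goal forall (eta : R -> R) t, (forall x, ex_derive eta x) -> t <> 0 ->
  continuity_2d_pt (fun u v => exp (u * eta v / 2) * (u + 3) / v ^ 2) 0 t.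
Proof. intros eta t H Ht. c2. Qed.

Lemma RInt_Phi_derive (eta : R -> R) A B C c :
  (forall x, ex_derive eta x) -> (forall x, ex_derive (Derive eta) x) ->
  (forall x, ex_derive (Derive (Derive eta)) x) ->
  is_derive (fun eps => RInt (fun r => Phi A B C c eta eps r) 1 4) 0
   (RInt (fun t => k1 A B C c * eta t / t ^ 2 + k2 A B C c * Derive eta t / t
                   + k3 A B C c * Derive (Derive eta) t) 1 4).
Proof.
  intros E1 E2 E3.
  evar (D : R -> R -> R).
  assert (HD : forall u v, is_derive (fun z => Phi A B C c eta z v) u (D u v)).
  { intros u v. unfold Phi, LamV, sTv. auto_derive. exact I.
    subst D. reflexivity. }
  subst D.
  erewrite RInt_ext.
  apply (is_derive_RInt_param (fun u t => Phi A B C c eta u t)).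
  - apply filter_forall. intros x t Ht. eexists. apply HD.
  - intros t Ht. rewrite Rmin_left, Rmax_right in Ht by lra.
    assert (Htz : t <> 0) by lra.
    eapply continuity_2d_pt_ext.
    + intros u v. symmetry. apply is_derive_unique. apply HD.
    + Time c2.
  - apply filter_forall. intros y.
    apply (ex_RInt_continuous (V:=R_CompleteNormedModule)).
    intros z Hz. rewrite Rmin_left, Rmax_right in Hz by lra.
    assert (Hz0 : z <> 0) by lra.
    apply (@ex_derive_continuous R_AbsRing R_NormedModule).
    unfold Phi, LamV, sTv. auto_derive. repeat split; auto; nz2.
  - intros t Ht. rewrite Rmin_left, Rmax_right in Ht by lra.
    cbv beta. symmetry. apply is_derive_unique. apply Phi_d0. lra.
Qed.

Lemma deriv_zero_out (eta : R -> R) r :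
  (forall r, r < 2 \/ 3 < r -> eta r = 0) -> (r < 2 \/ 3 < r) -> Derive eta r = 0.
Proof.
  intros Hs Hr.
  rewrite (Derive_ext_loc eta (fun _ => 0)). apply Derive_const.
  destruct Hr as [Hr|Hr].
  - assert (Hp : 0 < 2 - r) by lra.
    exists (mkposreal _ Hp). intros y Hy. apply Hs. left.
    unfold ball in Hy; simpl in Hy; unfold AbsRing_ball, abs, minus, plus, opp in Hy; simpl in Hy.
    apply Rabs_def2 in Hy. lra.
  - assert (Hp : 0 < r - 3) by lra.
    exists (mkposreal _ Hp). intros y Hy. apply Hs. right.
    unfold ball in Hy; simpl in Hy; unfold AbsRing_ball, abs, minus, plus, opp in Hy; simpl in Hy.
    apply Rabs_def2 in Hy. lra.
Qed.

Lemma RInt_combo (eta : R -> R) a1 a2 a3 :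
  (forall x, ex_derive eta x) -> (forall x, ex_derive (Derive eta) x) ->
  (forall x, ex_derive (Derive (Derive eta)) x) ->
  (forall r, r < 2 \/ 3 < r -> eta r = 0) ->
  RInt (fun t => a1 * eta t / t ^ 2 + a2 * Derive eta t / t + a3 * Derive (Derive eta) t) 1 4
  = (a1 + a2) * RInt (fun t => eta t / t ^ 2) 1 4.
Proof.
  intros E1 E2 E3 Hs.
  assert (Hc : forall f : R -> R, (forall z, 1 <= z <= 4 -> ex_derive f z) -> ex_RInt f 1 4).
  { intros f Hf. apply (ex_RInt_continuous (V:=R_CompleteNormedModule)).
    intros z Hz. rewrite Rmin_left, Rmax_right in Hz by lra.
    apply (@ex_derive_continuous R_AbsRing R_NormedModule). auto. }
  assert (HI : ex_RInt (fun t => eta t / t ^ 2) 1 4).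
  { apply Hc. intros z Hz. assert (z <> 0) by lra. auto_derive. repeat split; auto; nz2. }
  destruct HI as [I HI].
  rewrite (is_RInt_unique _ _ _ _ HI).
  apply is_RInt_unique.
  assert (H1 : is_RInt (fun t => Derive eta t / t - eta t / t ^ 2) 1 4 0).
  { replace 0 with (minus ((fun t => eta t / t) 4) ((fun t => eta t / t) 1)).
    - apply (is_RInt_derive (fun t => eta t / t)).
      + intros x Hx. rewrite Rmin_left, Rmax_right in Hx by lra.
        assert (x <> 0) by lra. auto_derive. repeat split; auto.
        change (fun x0 : R => eta x0) with eta. field. lra.
      + intros x Hx. rewrite Rmin_left, Rmax_right in Hx by lra.
        apply (@ex_derive_continuous R_AbsRing R_NormedModule).
        assert (x <> 0) by lra. auto_derive. repeat split; auto; nz2.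
    - cbv beta. rewrite (Hs 4), (Hs 1) by lra. unfold minus, plus, opp; simpl. field. }
  assert (H2 : is_RInt (fun t => Derive (Derive eta) t) 1 4 0).
  { replace 0 with (minus (Derive eta 4) (Derive eta 1)).
    - apply (is_RInt_derive (Derive eta)).
      + intros x Hx. apply Derive_correct. auto.
      + intros x Hx. apply (@ex_derive_continuous R_AbsRing R_NormedModule). auto.
    - rewrite (deriv_zero_out eta 4), (deriv_zero_out eta 1) by (auto; lra).
      unfold minus, plus, opp; simpl. ring. }
  apply (is_RInt_scal _ _ _ (a1 + a2)) in HI.
  apply (is_RInt_scal _ _ _ a2) in H1.
  apply (is_RInt_scal _ _ _ a3) in H2.
  pose proof (is_RInt_plus _ _ _ _ _ _ (is_RInt_plus _ _ _ _ _ _ HI H1) H2) as HH.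
  replace ((a1 + a2) * I) with (plus (plus (scal (a1 + a2) I) (scal a2 0)) (scal a3 0))
    by (unfold plus, scal; simpl; unfold mult; simpl; ring).
  eapply is_RInt_ext; [|exact HH].
  intros x Hx. rewrite Rmin_left, Rmax_right in Hx by lra.
  unfold scal, plus; simpl; unfold mult; simpl. field. lra.
Qed.

Lemma smooth_const (a : R) : smooth (fun _ => a).
Proof.
  intros k x. destruct k as [|k]; simpl; [exact I|].
  destruct k as [|k].
  - simpl. apply ex_derive_const.
  - apply (ex_derive_ext (fun _ => 0)). intros t. symmetry. apply Derive_n_const.
    apply ex_derive_const.
Qed.

Lemma smooth_D (f : R -> R) : smooth f -> forall x,
  ex_derive f x /\ ex_derive (Derive f) x /\ ex_derive (Derive (Derive f)) x
  /\ ex_derive (Derive (Derive (Derive f))) x.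
Proof.
  intros Hs x. split; [exact (Hs 1%nat x)|]. split; [exact (Hs 2%nat x)|].
  split; [exact (Hs 3%nat x)|exact (Hs 4%nat x)].
Qed.

Lemma key (A B C c : R) (eta : R -> R) :
  H_finite_at_4 A B C -> exp c <> 1 -> smooth eta ->
  (forall r, r < 2 \/ 3 < r -> eta r = 0) ->
  0 < RInt (fun t => eta t / t ^ 2) 1 4 ->
  (2 * A + B + 2 * C) * (1 - exp c) + 2 * (B + 4 * C) = 0.
Proof.
  intros HF Hc Hs Hsupp HI.
  assert (E1 : forall x, ex_derive eta x) by (intros; apply (smooth_D eta Hs)).
  assert (E2 : forall x, ex_derive (Derive eta) x) by (intros; apply (smooth_D eta Hs)).
  assert (E3 : forall x, ex_derive (Derive (Derive eta)) x) by (intros; apply (smooth_D eta Hs)).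
  assert (E4 : forall x, ex_derive (Derive (Derive (Derive eta))) x) by (intros; apply (smooth_D eta Hs)).
  idtac "A".
  destruct (HF (fun _ => 0) (fun _ => c) (smooth_const 0) (smooth_const c) 1 4 eta ltac:(lra) ltac:(lra) Hs)
    as [H _].
  { idtac "B". exists 2, 3. split; [lra|split; [lra|split; [lra|exact Hsupp]]]. }
  Time cbv beta in H.
  Time rewrite (Derive_ext _ (fun eps => 4 * PI * RInt (fun r => Phi A B C c eta eps r) 1 4)) in H
    by (intros; apply S0_Phi; auto).
  Time rewrite (is_derive_unique _ _ _ (is_derive_scal _ _ _ _ (RInt_Phi_derive eta A B C c E1 E2 E3))) in H.
  Time rewrite RInt_combo in H by auto.
  assert (Hk : k1 A B C c + k2 A B C c = 0).
  { pose proof PI_RGT_0. apply Rmult_integral in H. destruct H as [H|H].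
    - exfalso. lra.
    - apply Rmult_integral in H. destruct H as [H|H]; [exact H | lra]. }
  unfold k1, k2 in Hk.
  assert (HK : exp c <> 0) by nz2.
  assert (Hs1 : / exp c - 1 <> 0).
  { intro Hz. apply Hc. apply (Rmult_eq_reg_l (/ exp c)); [|nz2]. rewrite Rinv_l by auto. lra. }
  assert (Hfac : exp (c / 2) * (/ exp c - 1) / exp c <> 0) by (unfold Rdiv; nz2).
  apply (Rmult_eq_reg_l (exp (c / 2) * (/ exp c - 1) / exp c)); [|exact Hfac].
  rewrite Rmult_0_r. rewrite <- Hk. field. auto.
Qed.

Inductive pexp := PC (a : R) | PR | PY | PAdd (p q : pexp) | PMul (p q : pexp).

Fixpoint ev (p : pexp) (r y : R) : R :=
  match p with
  | PC a => a | PR => r | PY => y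
  | PAdd p q => ev p r y + ev q r y
  | PMul p q => ev p r y * ev q r y end.

Fixpoint dR (p : pexp) : pexp :=
  match p with
  | PC _ => PC 0 | PR => PC 1 | PY => PC 0
  | PAdd p q => PAdd (dR p) (dR q)
  | PMul p q => PAdd (PMul (dR p) q) (PMul p (dR q)) end.

Fixpoint dY (p : pexp) : pexp :=
  match p with
  | PC _ => PC 0 | PR => PC 0 | PY => PC 1
  | PAdd p q => PAdd (dY p) (dY q)
  | PMul p q => PAdd (PMul (dY p) q) (PMul p (dY q)) end.

Lemma isd_eq (f : R -> R) (x l l' : R) : is_derive f x l -> @eq R l l' -> is_derive f x l'.
Proof. intros H e; subst; exact H. Qed.

Lemma ev_derive (p : pexp) (g : R -> R) (x dg : R) :
  is_derive g x dg ->
  is_derive (fun r => ev p r (g r)) x (ev (dR p) x (g x) + ev (dY p) x (g x) * dg).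
Proof.
  intros Hg. induction p; simpl.
  - apply isd_eq with 0; [exact (is_derive_const (K:=R_AbsRing) (V:=R_NormedModule) a x)|ring].
  - apply isd_eq with 1; [exact (is_derive_id (K:=R_AbsRing) x)|ring].
  - eapply isd_eq; [exact Hg|]. ring.
  - eapply isd_eq; [exact (is_derive_plus (K:=R_AbsRing) (V:=R_NormedModule) _ _ _ _ _ IHp1 IHp2)|].
    unfold plus; simpl. ring.
  - assert (Hc : forall n m : R_AbsRing, mult n m = mult m n) by (intros; unfold mult; simpl; ring).
    eapply isd_eq; [exact (is_derive_mult (K:=R_AbsRing) _ _ _ _ _ IHp1 IHp2 Hc)|].
    unfold plus, mult; simpl. ring.
Qed.

Lemma ev_bound (p : pexp) : exists M N, 0 < M /\ forall r y, 1 <= r <= 4 -> 0 <= y ->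
  Rabs (ev p r y) <= M * (1 + y) ^ N.
Proof.
  induction p as [a| | |p1 [M1 [N1 [HM1 H1]]] p2 [M2 [N2 [HM2 H2]]]|p1 [M1 [N1 [HM1 H1]]] p2 [M2 [N2 [HM2 H2]]]].
  - exists (Rabs a + 1), 0%nat. split; [pose proof (Rabs_pos a); lra|].
    intros r y _ _. simpl. lra.
  - exists 4, 0%nat. split; [lra|]. intros r y Hr _. simpl. rewrite Rabs_pos_eq; lra.
  - exists 1, 1%nat. split; [lra|]. intros r y _ Hy. simpl. rewrite Rabs_pos_eq; lra.
  - exists (M1 + M2), (N1 + N2)%nat. split; [lra|]. intros r y Hr Hy. simpl.
    assert (HA : 1 <= (1 + y) ^ N1) by (apply pow_R1_Rle; lra).
    assert (HB : 1 <= (1 + y) ^ N2) by (apply pow_R1_Rle; lra).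
    rewrite pow_add.
    pose proof (H1 r y Hr Hy). pose proof (H2 r y Hr Hy).
    eapply Rle_trans; [apply Rabs_triang|].
    assert (M1 * (1 + y) ^ N1 <= M1 * ((1 + y) ^ N1 * (1 + y) ^ N2)).
    { apply Rmult_le_compat_l; [lra|]. rewrite <- (Rmult_1_r ((1+y)^N1)) at 1.
      apply Rmult_le_compat_l; lra. }
    assert (M2 * (1 + y) ^ N2 <= M2 * ((1 + y) ^ N1 * (1 + y) ^ N2)).
    { apply Rmult_le_compat_l; [lra|]. rewrite <- (Rmult_1_l ((1+y)^N2)) at 1.
      apply Rmult_le_compat_r; lra. }
    nra.
  - exists (M1 * M2), (N1 + N2)%nat. split; [nra|]. intros r y Hr Hy. simpl.
    rewrite Rabs_mult, pow_add.
    pose proof (H1 r y Hr Hy). pose proof (H2 r y Hr Hy).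
    replace (M1 * M2 * ((1 + y) ^ N1 * (1 + y) ^ N2)) with ((M1 * (1 + y) ^ N1) * (M2 * (1 + y) ^ N2)) by ring.
    apply Rmult_le_compat; auto; apply Rabs_pos.
Qed.

Lemma exp_pow_n (a : R) (n : nat) : exp a ^ n = exp (INR n * a).
Proof.
  induction n as [|n IH]; simpl.
  - rewrite Rmult_0_l, exp_0; reflexivity.
  - rewrite IH, <- exp_plus. f_equal. destruct n; simpl; ring.
Qed.

Lemma poly_exp_bound (N : nat) : exists K, 0 < K /\ forall y, 0 <= y -> (1 + y) ^ N * exp (- y) <= K.
Proof.
  set (m := INR N + 1).
  assert (Hm : 0 < m) by (unfold m; pose proof (pos_INR N); lra).
  exists (m ^ N * exp 1). split.
  { apply Rmult_lt_0_compat; [apply pow_lt; auto | apply exp_pos]. }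
  intros y Hy.
  assert (H1 : (1 + y) / m <= exp ((1 + y) / m)).
  { destruct (Req_dec ((1 + y) / m) 0) as [Hz|Hz].
    - rewrite Hz, exp_0. lra.
    - pose proof (exp_ineq1 _ Hz). lra. }
  assert (H2 : (1 + y) ^ N <= m ^ N * exp (INR N * ((1 + y) / m))).
  { rewrite <- exp_pow_n, <- Rpow_mult_distr.
    apply pow_incr. split; [lra|].
    apply (Rmult_le_reg_r (/ m)); [apply Rinv_0_lt_compat; lra|].
    replace (m * exp ((1 + y) / m) * / m) with (exp ((1 + y) / m)) by (field; lra).
    exact H1. }
  assert (H3 : INR N * ((1 + y) / m) <= 1 + y).
  { unfold Rdiv. rewrite <- Rmult_assoc. rewrite (Rmult_comm (INR N)).
    apply (Rmult_le_reg_r m); auto.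
    replace ((1 + y) * INR N * / m * m) with ((1 + y) * INR N) by (field; lra).
    unfold m. pose proof (pos_INR N). nra. }
  apply Rle_trans with (m ^ N * exp (INR N * ((1 + y) / m)) * exp (- y)).
  { apply Rmult_le_compat_r; [apply Rlt_le, exp_pos | exact H2]. }
  rewrite Rmult_assoc, <- exp_plus.
  apply Rmult_le_compat_l; [apply pow_le; lra|].
  destruct (Rle_lt_or_eq_dec _ _ H3) as [H4|H4].
  - apply Rlt_le, exp_increasing. lra.
  - rewrite H4. replace (1 + y + - y) with 1 by ring. lra.
Qed.

Definition qf (r : R) : R := (r - 2) * (3 - r).
Definition bf (p : pexp) (r : R) : R :=
  if Rlt_dec 0 (qf r) then ev p r (/ qf r) * exp (- / qf r) else 0.
Definition dP (p : pexp) : pexp :=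
  PAdd (dR p) (PMul (PAdd p (PMul (PC (-1)) (dY p)))
                     (PMul (PAdd (PC 5) (PMul (PC (-2)) PR)) (PMul PY PY))).

Lemma qf_cont x : continuous qf x.
Proof. apply (@ex_derive_continuous R_AbsRing R_NormedModule). unfold qf. auto_derive. exact I. Qed.

Lemma locally_qf_pos x : 0 < qf x -> locally x (fun z => 0 < qf z).
Proof.
  intros H. apply (qf_cont x (fun u => 0 < u)).
  apply (open_gt 0). exact H.
Qed.

Lemma locally_qf_neg x : qf x < 0 -> locally x (fun z => qf z < 0).
Proof.
  intros H. apply (qf_cont x (fun u => u < 0)).
  apply (open_lt 0). exact H.
Qed.

Lemma bf_derive_pos p x : 0 < qf x -> is_derive (bf p) x (bf (dP p) x).
Proof.
  intros Hq.
  apply (is_derive_ext_loc (fun z => ev p z (/ qf z) * exp (- / qf z))).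
  { generalize (locally_qf_pos x Hq). apply filter_imp. intros z Hz.
    unfold bf. destruct (Rlt_dec 0 (qf z)); [reflexivity|contradiction]. }
  assert (Hg : is_derive (fun z => / qf z) x (- (5 - 2 * x) / qf x ^ 2)).
  { unfold qf in *. auto_derive. nra. field. nra. }
  assert (He : is_derive (fun z => exp (- / qf z)) x (exp (- / qf x) * ((5 - 2 * x) / qf x ^ 2))).
  { change (fun z => exp (- / qf z)) with (fun z => exp (- / ((z - 2) * (3 - z)))).
    auto_derive. unfold qf in Hq; nra.
    replace (exp (- / ((x + - (2)) * (3 + - x)))) with (exp (- / qf x))
      by (unfold qf; f_equal; f_equal; f_equal; ring).
    unfold qf in *. field. nra. }
  pose proof (ev_derive p _ _ _ Hg) as Hp.
  assert (Hc : forall n m : R_AbsRing, mult n m = mult m n) by (intros; unfold mult; simpl; ring).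
  eapply isd_eq; [exact (is_derive_mult (K:=R_AbsRing) _ _ _ _ _ Hp He Hc)|].
  unfold bf. destruct (Rlt_dec 0 (qf x)); [|contradiction].
  unfold plus, mult; simpl. field. nra.
Qed.

Lemma bf_derive_neg p x : qf x < 0 -> is_derive (bf p) x (bf (dP p) x).
Proof.
  intros Hq.
  replace (bf (dP p) x) with 0.
  2: { unfold bf. destruct (Rlt_dec 0 (qf x)); [lra|reflexivity]. }
  apply (is_derive_ext_loc (fun _ => 0)).
  { generalize (locally_qf_neg x Hq). apply filter_imp. intros z Hz.
    unfold bf. destruct (Rlt_dec 0 (qf z)); [lra|reflexivity]. }
  exact (is_derive_const (K:=R_AbsRing) (V:=R_NormedModule) 0 x).
Qed.

Lemma bf_bound p : exists K, 0 < K /\ forall x z, qf x = 0 -> Rabs (z - x) < 1 ->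
  Rabs (bf p z) <= K * (z - x) ^ 2.
Proof.
  destruct (ev_bound p) as [M [N [HM HB]]].
  destruct (poly_exp_bound (N + 2)) as [K [HK HE]].
  exists (4 * M * K). split; [nra|].
  intros x z Hx Hz.
  unfold bf. destruct (Rlt_dec 0 (qf z)) as [Hq|Hq].
  2: { rewrite Rabs_R0. apply Rmult_le_pos; [nra|apply pow2_ge_0]. }
  assert (Hx23 : x = 2 \/ x = 3).
  { unfold qf in Hx. apply Rmult_integral in Hx. lra. }
  apply Rabs_def2 in Hz.
  assert (Hzr : 1 <= z <= 4) by lra.
  set (y := / qf z).
  assert (Hy : 0 < y) by (apply Rinv_0_lt_compat; auto).
  assert (Hqz : qf z = (z - x) * (5 - z - x)).
  { replace (qf z) with (qf z - qf x) by lra. unfold qf. ring. }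
  assert (Hq2 : qf z ^ 2 <= 4 * (z - x) ^ 2).
  { rewrite Hqz. rewrite Rpow_mult_distr.
    assert ((5 - z - x) ^ 2 <= 4) by (destruct Hx23; subst; nra).
    pose proof (pow2_ge_0 (z - x)). nra. }
  rewrite Rabs_mult, (Rabs_pos_eq (exp _)) by (apply Rlt_le, exp_pos).
  pose proof (HB z y Hzr (Rlt_le _ _ Hy)) as HBz.
  pose proof (HE y (Rlt_le _ _ Hy)) as HEy.
  rewrite pow_add in HEy.
  assert (Hqy : qf z * y = 1) by (unfold y; field; lra).
  (* (1+y)^N e^{-y} <= K / (1+y)^2 <= K / y^2 = K qf^2 *)
  assert (H1 : (1 + y) ^ N * exp (- y) <= K * qf z ^ 2).
  { assert (Hy2 : y ^ 2 <= (1 + y) ^ 2) by (apply pow_incr; lra).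
    assert (Hp : 0 < (1 + y) ^ N * exp (- y)) by (apply Rmult_lt_0_compat; [apply pow_lt; lra|apply exp_pos]).
    assert (Hqz2 : qf z ^ 2 * y ^ 2 = 1) by (rewrite <- Rpow_mult_distr, Hqy; ring).
    assert (HEy' : (1 + y) ^ N * exp (- y) * y ^ 2 <= K).
    { apply Rle_trans with ((1 + y) ^ N * (1 + y) ^ 2 * exp (- y)); [|exact HEy].
      replace ((1 + y) ^ N * (1 + y) ^ 2 * exp (- y)) with ((1 + y) ^ N * exp (- y) * (1 + y) ^ 2) by ring.
      apply Rmult_le_compat_l; lra. }
    replace ((1 + y) ^ N * exp (- y)) with ((1 + y) ^ N * exp (- y) * y ^ 2 * qf z ^ 2)
      by (rewrite Rmult_assoc, (Rmult_comm (y ^ 2)), Hqz2; ring).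
    apply Rmult_le_compat_r; [apply pow2_ge_0|exact HEy']. }
  apply Rle_trans with (M * (1 + y) ^ N * exp (- y)).
  { apply Rmult_le_compat_r; [apply Rlt_le, exp_pos|exact HBz]. }
  rewrite Rmult_assoc.
  apply Rle_trans with (M * (K * qf z ^ 2)); [apply Rmult_le_compat_l; lra|].
  replace (4 * M * K * (z - x) ^ 2) with (M * (K * (4 * (z - x) ^ 2))) by ring.
  apply Rmult_le_compat_l; [lra|]. apply Rmult_le_compat_l; lra.
Qed.

Lemma bf_derive_zero p x : qf x = 0 -> is_derive (bf p) x (bf (dP p) x).
Proof.
  intros Hq.
  assert (H0 : forall p, bf p x = 0).
  { intros p'. unfold bf. destruct (Rlt_dec 0 (qf x)); [lra|reflexivity]. }
  rewrite H0. apply is_derive_Reals.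
  destruct (bf_bound p) as [K [HK HB]].
  intros eps Heps.
  assert (Hd : 0 < Rmin 1 (eps / K)) by (apply Rmin_pos; [lra|apply Rdiv_lt_0_compat; lra]).
  exists (mkposreal _ Hd). intros h Hh Hhd. simpl in Hhd.
  pose proof (Rmin_l 1 (eps / K)). pose proof (Rmin_r 1 (eps / K)).
  rewrite H0. replace ((bf p (x + h) - 0) / h - 0) with (bf p (x + h) / h) by (field; auto).
  unfold Rdiv. rewrite Rabs_mult, Rabs_inv.
  assert (Hb := HB x (x + h) Hq). replace (x + h - x) with h in Hb by ring.
  specialize (Hb ltac:(replace (x + h - x) with h by ring; lra)).
  assert (Ha : 0 < Rabs h) by (apply Rabs_pos_lt; auto).
  apply (Rmult_lt_reg_r (Rabs h)); auto.
  rewrite Rmult_assoc, Rinv_l by lra. rewrite Rmult_1_r.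
  apply Rle_lt_trans with (K * h ^ 2); auto.
  replace (h ^ 2) with (Rabs h * Rabs h) by (rewrite <- Rabs_mult; simpl; rewrite Rmult_1_r; apply Rabs_pos_eq; nra).
  assert (K * Rabs h < eps).
  { apply (Rmult_lt_reg_r (/ K)); [apply Rinv_0_lt_compat; lra|].
    replace (K * Rabs h * / K) with (Rabs h) by (field; lra). unfold Rdiv in *. lra. }
  nra.
Qed.

Lemma bf_derive p x : is_derive (bf p) x (bf (dP p) x).
Proof.
  destruct (Rtotal_order (qf x) 0) as [H|[H|H]].
  - apply bf_derive_neg; auto.
  - apply bf_derive_zero; auto.
  - apply bf_derive_pos; auto.
Qed.

Lemma Derive_bf p : Derive (bf p) = bf (dP p).
Proof. apply functional_extensionality; intros x. apply is_derive_unique, bf_derive. Qed.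

Lemma Derive_n_bf n p : Derive_n (bf p) n = bf (Nat.iter n dP p).
Proof.
  induction n as [|n IH]; simpl; [reflexivity|].
  rewrite IH. apply Derive_bf.
Qed.

Lemma smooth_bf p : smooth (bf p).
Proof.
  intros k x. destruct k as [|k]; simpl; [exact I|].
  rewrite Derive_n_bf. eexists. apply bf_derive.
Qed.

Definition eta0 := bf (PC 1).

Lemma eta0_supp r : r < 2 \/ 3 < r -> eta0 r = 0.
Proof.
  intros Hr. unfold eta0, bf. destruct (Rlt_dec 0 (qf r)) as [Hq|Hq]; [|reflexivity].
  exfalso. unfold qf in Hq. destruct Hr; nra.
Qed.

Lemma eta0_nonneg r : 0 <= eta0 r.
Proof.
  unfold eta0, bf. destruct (Rlt_dec 0 (qf r)); [|lra]. simpl.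
  rewrite Rmult_1_l. apply Rlt_le, exp_pos.
Qed.

Lemma eta0_pos r : 2 < r < 3 -> 0 < eta0 r.
Proof.
  intros Hr. unfold eta0, bf. destruct (Rlt_dec 0 (qf r)) as [Hq|Hq].
  - simpl. rewrite Rmult_1_l. apply exp_pos.
  - exfalso. apply Hq. unfold qf. nra.
Qed.

Lemma eta0_int : 0 < RInt (fun t => eta0 t / t ^ 2) 1 4.
Proof.
  set (f := fun t => eta0 t / t ^ 2).
  assert (Hc : forall a b, 1 <= a -> a <= b -> ex_RInt f a b).
  { intros a b Ha Hb. apply (ex_RInt_continuous (V:=R_CompleteNormedModule)).
    intros z Hz. rewrite Rmin_left, Rmax_right in Hz by lra.
    apply (@ex_derive_continuous R_AbsRing R_NormedModule).
    unfold f. assert (z <> 0) by lra.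
    assert (ex_derive eta0 z) by (eexists; apply bf_derive).
    auto_derive. repeat split; auto; apply pow_nonzero; auto. }
  rewrite <- (RInt_Chasles f 1 2 4) by (apply Hc; lra).
  rewrite <- (RInt_Chasles f 2 3 4) by (apply Hc; lra).
  unfold plus; simpl.
  assert (H1 : 0 <= RInt f 1 2).
  { apply RInt_ge_0; [lra|apply Hc; lra|]. intros x Hx. unfold f.
    apply Rdiv_le_0_compat; [apply eta0_nonneg|apply pow_lt; lra]. }
  assert (H3 : 0 <= RInt f 3 4).
  { apply RInt_ge_0; [lra|apply Hc; lra|]. intros x Hx. unfold f.
    apply Rdiv_le_0_compat; [apply eta0_nonneg|apply pow_lt; lra]. }
  assert (H2 : 0 < RInt f 2 3).
  { apply RInt_gt_0; [lra| |].
    - intros x Hx. unfold f. apply Rdiv_lt_0_compat; [apply eta0_pos; lra|apply pow_lt; lra].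
    - intros x Hx. apply (@ex_derive_continuous R_AbsRing R_NormedModule).
      unfold f. assert (x <> 0) by lra.
      assert (ex_derive eta0 x) by (eexists; apply bf_derive).
      auto_derive. repeat split; auto; apply pow_nonzero; auto. }
  lra.
Qed.

Theorem theorem2 (A B C : R) :
  H_finite_at_4 A B C -> B = -4 * C /\ A = C.
Proof.
  intros HF.
  assert (K2 := key A B C (ln 2) eta0 HF).
  assert (K3 := key A B C (ln 3) eta0 HF).
  rewrite exp_ln in K2, K3 by lra.
  specialize (K2 ltac:(lra) (smooth_bf _) eta0_supp eta0_int).
  specialize (K3 ltac:(lra) (smooth_bf _) eta0_supp eta0_int).
  split; lra.
Qed.
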